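(* Let $T_{abc}$ be the torsion tensor of a 4-dimensional teleparallel geometry, decomposed as $T_{abc}=\tfrac23(t_{abc}-t_{acb})-\tfrac13(g_{ab}V_c-g_{ac}V_b)+\epsilon_{abcd}A^d$ into its vector part $V_a=T^b{}_{ba}$, axial part $A^a=\tfrac16\epsilon^{abcd}T_{bcd}$ and purely tensor part $t_{(ab)c}=\tfrac12(T_{abc}+T_{bac})-\tfrac16(g_{ca}V_b+g_{cb}V_a)+\tfrac13 g_{ab}V_c$. Then $T_{abc}$ is of alignment type II or more special if and only if, relative to a common null coframe, (i) the purely tensor part $t_{(ab)c}$ is of alignment type II, III, N or O, and (ii) the vector part $V$ and the axial part $A$ are each of alignment type II, III or O.
   Context: A teleparallel geometry is a 4-dimensional manifold with a coframe $\{\mathbf h^a\}$, metric $g=\eta_{ab}\mathbf h^a\otimes\mathbf h^b$ of Lorentzian signature, and a flat metric-compatible spin connection $\omega^a{}_b$; the torsion is $T^a{}_{\mu\nu}=\partial_\mu h^a{}_\nu-\partial_\nu h^a{}_\mu+\omega^a{}_{b\mu}h^b{}_\nu-\omega^a{}_{b\nu}h^b{}_\mu$, with frame indices lowered by $\eta_{ab}$; $\epsilon_{abcd}$ is the volume form. A complex null coframe is $\{\mathbf h^1,\mathbf h^2,\mathbf h^3,\mathbf h^4\}=\{\mathbf n,\boldsymbol\ell,\bar{\mathbf m},\mathbf m\}$ with $\eta_{12}=\eta_{21}=-1$, $\eta_{34}=\eta_{43}=1$, other $\eta_{ab}=0$. The boost weight of a covariant frame component $T_{a_1\dots a_r}$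 is the number of indices equal to $1$ minus the number equal to $2$. Relative to a given null coframe, a nonzero tensor is of alignment type II or more special if all its components of positive boost weight vanish, of type III or more special if all components of boost weight $\ge0$ vanish, of type N if all components of boost weight $\ge -1$ vanish, and of type O if it vanishes; a tensor is of a given type if such a null coframe exists. *)

(* Defs.v *)
From HB Require Import structures.
From mathcomp Require Import all_boot all_order all_algebra.
From mathcomp Require Import complex.
Set Implicit Arguments. Unset Strict Implicit. Unset Printing Implicit Defensive.
Import Order.TTheory GRing.Theory Num.Theory.
Local Open Scope ring_scope.

Section TP.
Variable R : rcfType.

Definition toC (x : R) : R[i] := Complex x 0.

(* coordinate components of tensors at a point (indices mu,nu,... : 'I_4) *)
Definition tensor3 := 'I_4 -> 'I_4 -> 'I_4 -> R.
Definition covec := 'I_4 -> R.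

Definition minkowski : 'M[R]_4 :=
  \matrix_(i, j) (if i == j then (if i == 0 then -1 else 1) else 0).

(* g is a Lorentzian metric: congruent to diag(-1,1,1,1) (Sylvester) *)
Definition lorentzian (g : 'M[R]_4) : Prop :=
  exists P : 'M[R]_4, P \in unitmx /\ P^T *m g *m P = minkowski.

Definition antisym23 (T : tensor3) : Prop :=
  forall mu nu rho, T mu nu rho = - T mu rho nu.

Definition levi (m n r s : 'I_4) : R :=
  \det (\matrix_(i < 4, j < 4)
          ((tnth [tuple m; n; r; s] i == j)%:R : R)).

Definition eps_low (g : 'M[R]_4) (m n r s : 'I_4) : R :=
  Num.sqrt `|\det g| * levi m n r s.

Definition eps_up (g : 'M[R]_4) (a b c d : 'I_4) : R :=
  \sum_(m < 4) \sum_(n < 4) \sum_(r < 4) \sum_(s < 4)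
    (invmx g) a m * (invmx g) b n * (invmx g) c r * (invmx g) d s
      * eps_low g m n r s.

Definition Vpart (g : 'M[R]_4) (T : tensor3) : covec :=
  fun a => \sum_(b < 4) \sum_(k < 4) (invmx g) b k * T k b a.

Definition Apart_up (g : 'M[R]_4) (T : tensor3) : covec :=
  fun a => 6^-1 * \sum_(b < 4) \sum_(c < 4) \sum_(d < 4) eps_up g a b c d * T b c d.

(* A_a = g_{ab} A^b (covariant components, used for boost weights) *)
Definition Apart (g : 'M[R]_4) (T : tensor3) : covec :=
  fun a => \sum_(b < 4) g a b * Apart_up g T b.

Definition tpart (g : 'M[R]_4) (T : tensor3) : tensor3 :=
  fun a b c => 2^-1 * (T a b c + T b a c)
               - 6^-1 * (g c a * Vpart g T b + g c b * Vpart g T a)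
               + 3^-1 * g a b * Vpart g T c.

(* frame metric of the complex null (co)frame {n, l, mbar, m}:
   indices 0,1,2,3 stand for 1,2,3,4; eta_12 = eta_21 = -1,
   eta_34 = eta_43 = 1, other components 0 *)
Definition eta (a b : 'I_4) : R[i] :=
  if ((a == 0) && (b == 1)) || ((a == 1) && (b == 0)) then -1
  else if ((a == 2) && (b == 3)) || ((a == 3) && (b == 2)) then 1
  else 0.

(* E a mu = coordinate components of the frame vector h_a dual to the
   coframe h^a.  (g = eta_ab h^a h^b) <-> g(h_a, h_b) = eta_ab.
   Reality: n, l real, m = conjugate of mbar. *)
Definition null_frame (g : 'M[R]_4) (E : 'I_4 -> 'I_4 -> R[i]) : Prop :=
  (forall a b : 'I_4,
      \sum_(m < 4) \sum_(n < 4) toC (g m n) * E a m * E b n = eta a b)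
  /\ (forall m : 'I_4,
      conjc (E 0 m) = E 0 m /\ conjc (E 1 m) = E 1 m /\ E 3 m = conjc (E 2 m)).

Definition comp3 (E : 'I_4 -> 'I_4 -> R[i]) (T : tensor3) (a b c : 'I_4) : R[i] :=
  \sum_(m < 4) \sum_(n < 4) \sum_(r < 4) toC (T m n r) * E a m * E b n * E c r.

Definition comp1 (E : 'I_4 -> 'I_4 -> R[i]) (V : covec) (a : 'I_4) : R[i] :=
  \sum_(m < 4) toC (V m) * E a m.

Definition bw (a : 'I_4) : int := (a == 0)%:R - (a == 1)%:R.

Definition typeII_or_more3 (E : 'I_4 -> 'I_4 -> R[i]) (T : tensor3) : Prop :=
  forall a b c : 'I_4, 0 < bw a + bw b + bw c -> comp3 E T a b c = 0.

Definition typeII_or_more1 (E : 'I_4 -> 'I_4 -> R[i]) (V : covec) : Prop :=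
  forall a : 'I_4, 0 < bw a -> comp1 E V a = 0.

End TP.

(* Main.v *)
Require Import Defs.
From HB Require Import structures.
From mathcomp Require Import all_boot all_order all_algebra.
From mathcomp Require Import complex.
From mathcomp Require Import ring perm.
Set Implicit Arguments. Unset Strict Implicit. Unset Printing Implicit Defensive.
Import Order.TTheory GRing.Theory Num.Theory.
Local Open Scope ring_scope.

Lemma sum4 (V : nmodType) (F : 'I_4 -> V) :
  \sum_(i < 4) F i = F 0 + F 1 + F 2 + F 3.
Proof.
rewrite !big_ord_recr big_ord0 /= add0r.
by congr (_ + _ + _ + _); congr F; apply: val_inj.
Qed.

Lemma prod4 (V : comNzRingType) (F : 'I_4 -> V) :
  \prod_(i < 4) F i = F 0 * F 1 * F 2 * F 3.
Proof.
rewrite !big_ord_recr big_ord0 /= mul1r.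
by congr (_ * _ * _ * _); congr F; apply: val_inj.
Qed.

Lemma ord4_cases (i : 'I_4) : i = 0 \/ i = 1 \/ i = 2 \/ i = 3.
Proof.
case: i => [[|[|[|[|//]]]] Hi].
- by left; apply: val_inj.
- by right; left; apply: val_inj.
- by right; right; left; apply: val_inj.
- by right; right; right; apply: val_inj.
Qed.

Definition leviS (S : comNzRingType) (m n r s : 'I_4) : S :=
  \det (\matrix_(i < 4, j < 4) ((tnth [tuple m; n; r; s] i == j)%:R : S)).

Lemma sum_delta (S : comNzRingType) (k : 'I_4) (F : 'I_4 -> S) :
  \sum_(m < 4) (m == k)%:R * F m = F k.
Proof.
rewrite (bigD1 k) //= eqxx mul1r big1 ?addr0 // => i /negbTE ->.
by rewrite mul0r.
Qed.

Lemma rearr (S : comNzRingType) (a b c d e x : S) :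
  a * (b * c * d * e) * x = b * (c * (d * (e * (a * x)))).
Proof. ring. Qed.

Lemma sum_delta' (S : comNzRingType) (k : 'I_4) (F : 'I_4 -> S) :
  \sum_(m < 4) (k == m)%:R * F m = F k.
Proof. by under eq_bigr => m _ do rewrite eq_sym; apply: sum_delta. Qed.

Lemma sum_deltaT (S : comNzRingType) (I : finType) (k : I) (F : I -> S) :
  \sum_(m : I) (k == m)%:R * F m = F k.
Proof.
rewrite (bigD1 k) //= eqxx mul1r big1 ?addr0 // => i; rewrite eq_sym => /negbTE ->.
by rewrite mul0r.
Qed.

Lemma collapse4 (S : comNzRingType) (F : 'I_4 -> 'I_4 -> 'I_4 -> 'I_4 -> S) a b c d :
  \sum_(m < 4) \sum_(n < 4) \sum_(r < 4) \sum_(s < 4)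
    (a == m)%:R * ((b == n)%:R * ((c == r)%:R * ((d == s)%:R * F m n r s)))
  = F a b c d.
Proof.
under eq_bigr => m _ do under eq_bigr => n _ do under eq_bigr => r _ do
  rewrite -mulr_sumr -mulr_sumr -mulr_sumr.
under eq_bigr => m _ do under eq_bigr => n _ do rewrite -mulr_sumr -mulr_sumr.
under eq_bigr => m _ do rewrite -mulr_sumr.
by rewrite !sum_deltaT.
Qed.

Lemma leibniz (S : comNzRingType) (X : 'M[S]_4) :
  \sum_(m < 4) \sum_(n < 4) \sum_(r < 4) \sum_(s < 4)
     leviS S m n r s * (X 0 m * X 1 n * X 2 r * X 3 s) = \det X.
Proof.
rewrite /leviS.
under eq_bigr => m _ do under eq_bigr => n _ do under eq_bigr => r _ do
  under eq_bigr => s _ do rewrite /determinant mulr_suml.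
under eq_bigr => m _ do under eq_bigr => n _ do under eq_bigr => r _ do
  rewrite exchange_big.
under eq_bigr => m _ do under eq_bigr => n _ do rewrite exchange_big.
under eq_bigr => m _ do rewrite exchange_big.
rewrite exchange_big /=; apply: eq_bigr => sg _; rewrite /=.
have E m n r s : ((-1) ^+ sg * \prod_i3
   (\matrix_(i4, j) ((tnth [tuple m; n; r; s] i4 == j)%:R : S)) i3 (sg i3)) *
   (X 0 m * X 1 n * X 2 r * X 3 s) =
   (sg 0 == m)%:R * ((sg 1 == n)%:R * ((sg 2 == r)%:R * ((sg 3 == s)%:R *
         ((-1) ^+ sg * (X 0 m * X 1 n * X 2 r * X 3 s))))).
  by rewrite prod4 !mxE (_ : tnth [tuple m; n; r; s] 0 = m) // (_ : tnth [tuple m; n; r; s] 1 = n) // (_ : tnth [tuple m; n; r; s] 2 = r) // (_ : tnth [tuple m; n; r; s] 3 = s) // (eq_sym m) (eq_sym n) (eq_sym r) (eq_sym s) rearr.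
under eq_bigr => m _ do under eq_bigr => n _ do under eq_bigr => r _ do
  under eq_bigr => s _ do rewrite E.
rewrite (collapse4 (fun m n r s => (-1) ^+ sg * (X 0 m * X 1 n * X 2 r * X 3 s))) prod4.
by [].
Qed.

Section LeviVals.
Variable S : comNzRingType.
Local Notation L := (leviS S).

Lemma levi_r01 a c d x : L a a c d = 0 /\ L a c a d = 0 /\ L a c d a = 0
  /\ L x a a d = 0 /\ L x a d a = 0 /\ L x d a a = 0.
Proof.
rewrite /leviS; split; [|split; [|split; [|split; [|split]]]].
- by apply: (@determinant_alternate _ _ _ 0 1) => // j; rewrite !mxE.
- by apply: (@determinant_alternate _ _ _ 0 2) => // j; rewrite !mxE.
- by apply: (@determinant_alternate _ _ _ 0 3) => // j; rewrite !mxE.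
- by apply: (@determinant_alternate _ _ _ 1 2) => // j; rewrite !mxE.
- by apply: (@determinant_alternate _ _ _ 1 3) => // j; rewrite !mxE.
- by apply: (@determinant_alternate _ _ _ 2 3) => // j; rewrite !mxE.
Qed.

Lemma levi_xrow (i1 i2 : 'I_4) a b c d a' b' c' d' :
  i1 != i2 ->
  (forall i, tnth [tuple a'; b'; c'; d'] i = tnth [tuple a; b; c; d] (tperm i1 i2 i)) ->
  L a' b' c' d' = - L a b c d.
Proof.
move=> ne H; rewrite /leviS.
have -> : (\matrix_(i < 4, j < 4) ((tnth [tuple a'; b'; c'; d'] i == j)%:R : S)) =
  xrow i1 i2 (\matrix_(i < 4, j < 4) ((tnth [tuple a; b; c; d] i == j)%:R : S)).
  by apply/matrixP => i j; rewrite !mxE H.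
by rewrite xrowE det_mulmx det_perm odd_tperm ne expr1 mulN1r.
Qed.

Lemma levi_s12 a b c d : L a c b d = - L a b c d.
Proof.
apply: (@levi_xrow 1 2) => // i.
by case: (ord4_cases i) => [->|[->|[->|->]]]; rewrite ?tpermL ?tpermR ?tpermD.
Qed.
Lemma levi_s23 a b c d : L a b d c = - L a b c d.
Proof.
apply: (@levi_xrow 2 3) => // i.
by case: (ord4_cases i) => [->|[->|[->|->]]]; rewrite ?tpermL ?tpermR ?tpermD.
Qed.

Lemma levi_0123 : L 0 1 2 3 = 1.
Proof.
rewrite /leviS -[RHS](det1 S 4); congr (\det _); apply/matrixP => i j; rewrite !mxE.
by case: (ord4_cases i) => [->|[->|[->|->]]].
Qed.

Lemma levi_vals : L 1 0 2 3 = -1 /\ L 1 0 3 2 = 1 /\ L 1 2 0 3 = 1 /\ L 1 2 3 0 = -1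
  /\ L 1 3 0 2 = -1 /\ L 1 3 2 0 = 1.
Proof.
have h : L 1 0 2 3 = -1.
  rewrite -levi_0123; apply: (@levi_xrow 0 1) => // i.
  by case: (ord4_cases i) => [->|[->|[->|->]]]; rewrite ?tpermL ?tpermR ?tpermD.
have h2 : L 1 0 3 2 = 1 by rewrite levi_s23 h opprK.
have h3 : L 1 2 0 3 = 1 by rewrite levi_s12 h opprK.
have h4 : L 1 2 3 0 = -1 by rewrite levi_s23 h3.
have h5 : L 1 3 0 2 = -1 by rewrite levi_s12 h2.
have h6 : L 1 3 2 0 = 1 by rewrite levi_s23 h5 opprK.
by [].
Qed.
Lemma lv1 : L 1 0 2 3 = -1. Proof. by case: levi_vals. Qed.
Lemma lv2 : L 1 0 3 2 = 1. Proof. by case: levi_vals => _ []. Qed.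
Lemma lv3 : L 1 2 0 3 = 1. Proof. by case: levi_vals => _ [] _ []. Qed.
Lemma lv4 : L 1 2 3 0 = -1. Proof. by case: levi_vals => _ [] _ [] _ []. Qed.
Lemma lv5 : L 1 3 0 2 = -1. Proof. by case: levi_vals => _ [] _ [] _ [] _ []. Qed.
Lemma lv6 : L 1 3 2 0 = 1. Proof. by case: levi_vals => _ [] _ [] _ [] _ []. Qed.
Lemma lz1 a c d : L a a c d = 0. Proof. by case: (levi_r01 a c d a). Qed.
Lemma lz2 a c d : L a c a d = 0. Proof. by case: (levi_r01 a c d a) => _ []. Qed.
Lemma lz3 a c d : L a c d a = 0. Proof. by case: (levi_r01 a c d a) => _ [] _ []. Qed.
Lemma lz4 x a d : L x a a d = 0. Proof. by case: (levi_r01 a x d x) => _ [] _ [] _ []. Qed.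
Lemma lz5 x a d : L x a d a = 0. Proof. by case: (levi_r01 a x d x) => _ [] _ [] _ [] _ []. Qed.
Lemma lz6 x a d : L x d a a = 0. Proof. by case: (levi_r01 a d d x) => _ [] _ [] _ [] _ [] . Qed.
End LeviVals.
Section Reorder.
Variable V : nmodType.
Local Notation I := 'I_4.

Lemma ex2 (F : I -> I -> V) : \sum_(a<4) \sum_(b<4) F a b = \sum_(b<4) \sum_(a<4) F a b.
Proof. by rewrite exchange_big. Qed.

Lemma front3 (F : I -> I -> I -> V) :
  \sum_(a<4) \sum_(b<4) \sum_(c<4) F a b c = \sum_(c<4) \sum_(a<4) \sum_(b<4) F a b c.
Proof.
under eq_bigr => a _ do rewrite ex2.
by rewrite ex2.
Qed.

Lemma front4 (F : I -> I -> I -> I -> V) :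
  \sum_(a<4) \sum_(b<4) \sum_(c<4) \sum_(d<4) F a b c d =
  \sum_(d<4) \sum_(a<4) \sum_(b<4) \sum_(c<4) F a b c d.
Proof.
under eq_bigr => a _ do rewrite front3.
by rewrite ex2.
Qed.

Lemma front5 (F : I -> I -> I -> I -> I -> V) :
  \sum_(a<4) \sum_(b<4) \sum_(c<4) \sum_(d<4) \sum_(e<4) F a b c d e =
  \sum_(e<4) \sum_(a<4) \sum_(b<4) \sum_(c<4) \sum_(d<4) F a b c d e.
Proof.
under eq_bigr => a _ do rewrite front4.
by rewrite ex2.
Qed.

Lemma front6 (F : I -> I -> I -> I -> I -> I -> V) :
  \sum_(a<4) \sum_(b<4) \sum_(c<4) \sum_(d<4) \sum_(e<4) \sum_(f<4) F a b c d e f =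
  \sum_(f<4) \sum_(a<4) \sum_(b<4) \sum_(c<4) \sum_(d<4) \sum_(e<4) F a b c d e f.
Proof.
under eq_bigr => a _ do rewrite front5.
by rewrite ex2.
Qed.

Lemma rev5 (F : I -> I -> I -> I -> I -> V) :
  \sum_(a<4) \sum_(b<4) \sum_(c<4) \sum_(d<4) \sum_(e<4) F a b c d e =
  \sum_(e<4) \sum_(d<4) \sum_(c<4) \sum_(b<4) \sum_(a<4) F a b c d e.
Proof.
rewrite [LHS]front5; apply: eq_bigr => e _.
rewrite [LHS]front4; apply: eq_bigr => d _.
rewrite [LHS]front3; apply: eq_bigr => c _.
by rewrite ex2.
Qed.

Lemma swap33 (F : I -> I -> I -> I -> I -> I -> V) :
  \sum_(a<4) \sum_(b<4) \sum_(c<4) \sum_(d<4) \sum_(e<4) \sum_(f<4) F a b c d e f =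
  \sum_(d<4) \sum_(e<4) \sum_(f<4) \sum_(a<4) \sum_(b<4) \sum_(c<4) F a b c d e f.
Proof.
rewrite [LHS]front4; apply: eq_bigr => d _.
rewrite [LHS]front4; apply: eq_bigr => e _.
exact: (front4 (fun a b c f => F a b c d e f)).
Qed.
Lemma back4 (F : I -> I -> I -> I -> V) :
  \sum_(a<4) \sum_(b<4) \sum_(c<4) \sum_(d<4) F a b c d =
  \sum_(b<4) \sum_(c<4) \sum_(d<4) \sum_(a<4) F a b c d.
Proof.
rewrite ex2; apply: eq_bigr => b _.
rewrite ex2; apply: eq_bigr => c _.
by rewrite ex2.
Qed.
End Reorder.

Section Frame.
Variable R : rcfType.
Local Notation C := R[i].
Local Notation tC := (real_complex R).
Variables (g : 'M[R]_4) (T : tensor3 R) (E : 'I_4 -> 'I_4 -> C).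
Hypothesis HE : null_frame g E.
Hypothesis HT : antisym23 T.

Lemma toCE (x : R) : toC x = tC x. Proof. by []. Qed.

Lemma tCM (x y : R) : tC (x * y) = tC x * tC y. Proof. exact: rmorphM. Qed.
Lemma tCD (x y : R) : tC (x + y) = tC x + tC y. Proof. exact: rmorphD. Qed.
Lemma tCB (x y : R) : tC (x - y) = tC x - tC y. Proof. exact: rmorphB. Qed.
Lemma tCN (x : R) : tC (- x) = - tC x. Proof. exact: rmorphN. Qed.
Lemma tCV (x : R) : tC (x^-1) = (tC x)^-1. Proof. exact: fmorphV. Qed.
Lemma tCn n : tC (n%:R) = n%:R. Proof. exact: rmorph_nat. Qed.
Lemma tC_sum (I : Type) (r : seq I) (P : pred I) (F : I -> R) :
  tC (\sum_(i <- r | P i) F i) = \sum_(i <- r | P i) tC (F i).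
Proof. exact: rmorph_sum. Qed.

Lemma eta00 : Defs.eta R 0 0 = 0. Proof. by []. Qed.
Lemma eta01 : Defs.eta R 0 1 = -1. Proof. by []. Qed.
Lemma eta02 : Defs.eta R 0 2 = 0. Proof. by []. Qed.
Lemma eta03 : Defs.eta R 0 3 = 0. Proof. by []. Qed.
Lemma eta10 : Defs.eta R 1 0 = -1. Proof. by []. Qed.
Lemma eta11 : Defs.eta R 1 1 = 0. Proof. by []. Qed.
Lemma eta12 : Defs.eta R 1 2 = 0. Proof. by []. Qed.
Lemma eta13 : Defs.eta R 1 3 = 0. Proof. by []. Qed.
Lemma eta20 : Defs.eta R 2 0 = 0. Proof. by []. Qed.
Lemma eta21 : Defs.eta R 2 1 = 0. Proof. by []. Qed.
Lemma eta22 : Defs.eta R 2 2 = 0. Proof. by []. Qed.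
Lemma eta23 : Defs.eta R 2 3 = 1. Proof. by []. Qed.
Lemma eta30 : Defs.eta R 3 0 = 0. Proof. by []. Qed.
Lemma eta31 : Defs.eta R 3 1 = 0. Proof. by []. Qed.
Lemma eta32 : Defs.eta R 3 2 = 1. Proof. by []. Qed.
Lemma eta33 : Defs.eta R 3 3 = 0. Proof. by []. Qed.
Lemma bw0 : bw 0 = 1. Proof. by []. Qed.

Definition Em : 'M[C]_4 := \matrix_(a, m) E a m.
Definition Gc : 'M[C]_4 := map_mx tC g.
Definition Et : 'M[C]_4 := \matrix_(a, b) Defs.eta R a b.

Lemma frameG : Em *m Gc *m Em^T = Et.
Proof.
apply/matrixP => a b; rewrite /Em /Gc !mxE -(HE.1 a b).
rewrite exchange_big /=; apply: eq_bigr => n _.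
rewrite !mxE mulr_suml; apply: eq_bigr => m _.
rewrite !mxE toCE; ring.
Qed.

Lemma EtEt : Et *m Et = 1%:M.
Proof.
apply/matrixP => i j; rewrite !mxE sum4 !mxE.
by case: (ord4_cases i) => [->|[->|[->|->]]]; case: (ord4_cases j) => [->|[->|[->|->]]];
  rewrite /Defs.eta /=; ring.
Qed.

Definition Gi' : 'M[C]_4 := Em^T *m Et *m Em.

Lemma Em_unit : Em \in unitmx.
Proof.
have h : Em *m (Gc *m Em^T *m Et) = 1%:M by rewrite !mulmxA frameG EtEt.
by case: (mulmx1_unit h).
Qed.

Lemma GcGi' : Gc *m Gi' = 1%:M.
Proof.
have h : Em *m (Gc *m Em^T *m Et) = 1%:M by rewrite !mulmxA frameG EtEt.
have := mulmx1C h. by rewrite /Gi' !mulmxA.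
Qed.

Lemma g_unit : g \in unitmx.
Proof. by rewrite -(map_unitmx tC); case: (mulmx1_unit GcGi'). Qed.

Lemma Gi_eq : map_mx tC (invmx g) = Gi'.
Proof.
rewrite map_invmx -/Gc.
have hu : Gc \in unitmx by case: (mulmx1_unit GcGi').
by rewrite -[RHS]mul1mx -(mulVmx hu) -mulmxA GcGi' mulmx1.
Qed.

Lemma GcGi : Gc *m map_mx tC (invmx g) = 1%:M.
Proof. by rewrite Gi_eq GcGi'. Qed.


Lemma prod_sums (A : 'I_4 -> 'I_4 -> C) (B : 'I_4 -> C) :
  (\sum_(a < 4) \sum_(b < 4) A a b) * (\sum_(c < 4) B c) =
  \sum_(a < 4) \sum_(b < 4) \sum_(c < 4) A a b * B c.
Proof.
rewrite mulr_suml; apply: eq_bigr => a _; rewrite mulr_suml; apply: eq_bigr => b _.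
by rewrite mulr_sumr.
Qed.

Local Notation Tf := (comp3 E T).

Lemma Tf_anti a b c : Tf a b c = - Tf a c b.
Proof.
rewrite /comp3 -sumrN; apply: eq_bigr => m _.
rewrite [in RHS]exchange_big /= -sumrN; apply: eq_bigr => n _.
rewrite -sumrN; apply: eq_bigr => r _.
rewrite (HT m n r) !toCE tCN; ring.
Qed.

Lemma Tf_diag a b : Tf a b b = 0.
Proof.
have h := Tf_anti a b b.
apply/eqP; move: (mulrn_eq0 (Tf a b b) 2); rewrite mulr2n {1}h addNr eqxx /=.
by move=> <-.
Qed.

Definition body3 (X : 'I_4 -> 'I_4 -> 'I_4 -> C) p q r :=
  \sum_(m < 4) \sum_(n < 4) \sum_(s < 4) X m n s * (E p m * E q n * E r s).

Lemma comp3_body (X : tensor3 R) p q r :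
  comp3 E X p q r = body3 (fun m n s => tC (X m n s)) p q r.
Proof.
rewrite /comp3 /body3; do 3! (apply: eq_bigr => ? _); by rewrite toCE !mulrA.
Qed.

Lemma piece2 p q r : Tf q p r = body3 (fun m n s => tC (T n m s)) p q r.
Proof.
rewrite comp3_body /body3 exchange_big /=; do 3! (apply: eq_bigr => ? _); ring.
Qed.

Definition Vf := comp1 E (Vpart g T).

Lemma piece3 (V : covec R) p q r :
  Defs.eta R r p * comp1 E V q = body3 (fun m n s => tC (g s m * V n)) p q r.
Proof.
rewrite -(HE.1 r p) /comp1 prod_sums /body3.
rewrite [LHS]front3 [LHS]front3.
do 3! (apply: eq_bigr => ? _); rewrite !toCE tCM; ring.
Qed.

Lemma piece4 (V : covec R) p q r :
  Defs.eta R r q * comp1 E V p = body3 (fun m n s => tC (g s n * V m)) p q r.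
Proof.
rewrite -(HE.1 r q) /comp1 prod_sums /body3.
rewrite [LHS]front3; apply: eq_bigr => m _; rewrite exchange_big /=.
do 2! (apply: eq_bigr => ? _); rewrite !toCE tCM; ring.
Qed.

Lemma piece5 (V : covec R) p q r :
  Defs.eta R p q * comp1 E V r = body3 (fun m n s => tC (g m n * V s)) p q r.
Proof.
rewrite -(HE.1 p q) /comp1 prod_sums /body3.
do 3! (apply: eq_bigr => ? _); rewrite !toCE tCM; ring.
Qed.

Lemma body3_add X Y p q r :
  body3 X p q r + body3 Y p q r = body3 (fun m n s => X m n s + Y m n s) p q r.
Proof.
rewrite /body3 -big_split; apply: eq_bigr => m _.
rewrite -big_split; apply: eq_bigr => n _.
rewrite -big_split; apply: eq_bigr => s _ /=; ring.
Qed.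

Lemma body3_sub X Y p q r :
  body3 X p q r - body3 Y p q r = body3 (fun m n s => X m n s - Y m n s) p q r.
Proof.
rewrite /body3 -sumrB; apply: eq_bigr => m _.
rewrite -sumrB; apply: eq_bigr => n _.
rewrite -sumrB; apply: eq_bigr => s _; ring.
Qed.

Lemma body3_scale k X p q r :
  k * body3 X p q r = body3 (fun m n s => k * X m n s) p q r.
Proof.
rewrite /body3 mulr_sumr; apply: eq_bigr => m _.
rewrite mulr_sumr; apply: eq_bigr => n _.
rewrite mulr_sumr; apply: eq_bigr => s _; ring.
Qed.

Lemma body3_ext X Y p q r : (forall m n s, X m n s = Y m n s) ->
  body3 X p q r = body3 Y p q r.
Proof. by move=> h; rewrite /body3; do 3! (apply: eq_bigr => ? _); rewrite h. Qed.

Lemma t_frame p q r :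
  comp3 E (tpart g T) p q r =
  2^-1 * (Tf p q r + Tf q p r)
  - 6^-1 * (Defs.eta R r p * Vf q + Defs.eta R r q * Vf p)
  + 3^-1 * (Defs.eta R p q * Vf r).
Proof.
rewrite /Vf piece3 piece4 piece5 (comp3_body T p q r) piece2 comp3_body.
rewrite !body3_add !body3_scale body3_sub body3_add.
apply: body3_ext => m n s.
rewrite /tpart !(tCV, tCn, tCD, tCB, tCN, tCM); ring.
Qed.

Lemma Gi_entry b k : tC (invmx g b k) =
  \sum_(q < 4) \sum_(p < 4) E p b * Defs.eta R p q * E q k.
Proof.
have := congr1 (fun M : 'M[C]_4 => M b k) Gi_eq; rewrite /= mxE => ->.
rewrite /Gi' !mxE; apply: eq_bigr => q _; rewrite !mxE mulr_suml; apply: eq_bigr => p _.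
by rewrite !mxE.
Qed.

Lemma V_frame a : Vf a = \sum_(p < 4) \sum_(q < 4) Defs.eta R p q * Tf q p a.
Proof.
rewrite /Vf /comp1 /Vpart.
transitivity (\sum_(m < 4) \sum_(b < 4) \sum_(k < 4) \sum_(q < 4) \sum_(p < 4)
   E p b * Defs.eta R p q * E q k * tC (T k b m) * E a m).
  apply: eq_bigr => m _; rewrite toCE tC_sum mulr_suml; apply: eq_bigr => b _.
  rewrite tC_sum mulr_suml; apply: eq_bigr => k _.
  rewrite tCM Gi_entry !mulr_suml; apply: eq_bigr => q _.
  rewrite !mulr_suml; apply: eq_bigr => p _; ring.
rewrite rev5; apply: eq_bigr => p _; apply: eq_bigr => q _.
rewrite /comp3 mulr_sumr; apply: eq_bigr => k _.
rewrite mulr_sumr; apply: eq_bigr => b _.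
rewrite mulr_sumr; apply: eq_bigr => m _; rewrite toCE; ring.
Qed.

Lemma leviC m n r s : tC (@levi R m n r s) = leviS C m n r s.
Proof.
rewrite /levi /leviS -det_map_mx; congr (\det _); apply/matrixP => i j.
by rewrite !mxE rmorph_nat.
Qed.

Definition sqC := tC (Num.sqrt `|\det g|).
Definition Wf m c d e := \sum_(n < 4) \sum_(r < 4) \sum_(s < 4)
  tC (invmx g c n) * tC (invmx g d r) * tC (invmx g e s) * (sqC * leviS C m n r s).
Definition uf m := 6^-1 * \sum_(c < 4) \sum_(d < 4) \sum_(e < 4) tC (T c d e) * Wf m c d e.

Ltac flat_step := rewrite ?(tC_sum, tCM, mulr_suml, mulr_sumr); apply: eq_bigr => ? _.

Lemma claim1 b : tC (Apart_up g T b) = \sum_(m < 4) tC (invmx g b m) * uf m.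
Proof.
rewrite /Apart_up tCM tCV tCn.
transitivity (6^-1 * \sum_(c < 4) \sum_(d < 4) \sum_(e < 4) \sum_(m < 4)
  \sum_(n < 4) \sum_(r < 4) \sum_(s < 4)
  tC (invmx g b m) * (tC (invmx g c n) * tC (invmx g d r) * tC (invmx g e s) *
   (sqC * leviS C m n r s) * tC (T c d e))).
  rewrite /eps_up /eps_low; congr (_ * _); do 7 flat_step.
  rewrite !tCM leviC /sqC; ring.
rewrite [X in _ * X]front4 mulr_sumr; apply: eq_bigr => m _.
rewrite /uf /Wf mulrCA; congr (_ * _).
do 6 flat_step; ring.
Qed.

Lemma claim2 x : tC (Apart g T x) = uf x.
Proof.
rewrite /Apart tC_sum.
under eq_bigr => b _ do rewrite tCM claim1 mulr_sumr.
rewrite exchange_big /=.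
transitivity (\sum_(m < 4) (x == m)%:R * uf m); last by rewrite sum_deltaT.
apply: eq_bigr => m _.
under eq_bigr => b _ do rewrite mulrA.
rewrite -mulr_suml; congr (_ * _).
have := congr1 (fun M : 'M[C]_4 => M x m) GcGi; rewrite !mxE => <-.
by apply: eq_bigr => b _; rewrite /Gc !mxE.
Qed.

Definition Mx c d e : 'M[C]_4 := \matrix_(i < 4, j < 4)
  (if i == 0 then E 0 j else if i == 1 then tC (invmx g c j)
   else if i == 2 then tC (invmx g d j) else tC (invmx g e j)).

Lemma claim3 : comp1 E (Apart g T) 0 =
  6^-1 * sqC * \sum_(c < 4) \sum_(d < 4) \sum_(e < 4) tC (T c d e) * \det (Mx c d e).
Proof.
rewrite /comp1.
under eq_bigr => x _ do rewrite toCE claim2.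
transitivity (6^-1 * \sum_(x < 4) \sum_(c < 4) \sum_(d < 4) \sum_(e < 4)
   \sum_(n < 4) \sum_(r < 4) \sum_(s < 4)
   tC (T c d e) * (sqC * (leviS C x n r s * (E 0 x * tC (invmx g c n) *
      tC (invmx g d r) * tC (invmx g e s))))).
  rewrite mulr_sumr; apply: eq_bigr => x _; rewrite /uf /Wf -mulrA; congr (_ * _).
  do 6 flat_step; ring.
rewrite -mulrA; congr (_ * _).
rewrite [LHS]back4.
do 3 flat_step.
rewrite -leibniz /Mx.
do 4 flat_step.
rewrite !mxE /=; ring.
Qed.

Definition Bx c d e : 'M[C]_4 := \matrix_(i < 4, j < 4)
  (if i == 0 then - ((j == 1)%:R) else if i == 1 then E j c
   else if i == 2 then E j d else E j e).

Lemma rowGi c j : \sum_(k < 4) E k c * (Et *m Em) k j = tC (invmx g c j).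
Proof.
rewrite Gi_entry [RHS]exchange_big /=; apply: eq_bigr => k _.
rewrite !mxE mulr_sumr; apply: eq_bigr => q _; rewrite !mxE; ring.
Qed.

Lemma claim4 c d e : Mx c d e = Bx c d e *m (Et *m Em).
Proof.
apply/matrixP => i j; rewrite [in RHS]mxE /Mx /Bx mxE.
case: (ord4_cases i) => [->|[->|[->|->]]] /=.
- rewrite sum4 /Et /Em !mxE /= !sum4 !mxE /Defs.eta /=; ring.
- by rewrite -rowGi; apply: eq_bigr => k _; rewrite mxE.
- by rewrite -rowGi; apply: eq_bigr => k _; rewrite mxE.
- by rewrite -rowGi; apply: eq_bigr => k _; rewrite mxE.
Qed.

Lemma claim5 c d e : \det (Bx c d e) =
  - \sum_(n < 4) \sum_(r < 4) \sum_(s < 4) leviS C 1 n r s * (E n c * E r d * E s e).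
Proof.
rewrite -leibniz.
transitivity (\sum_(m < 4) (1 == m)%:R * - \sum_(n < 4) \sum_(r < 4) \sum_(s < 4)
   leviS C m n r s * (E n c * E r d * E s e)); last by rewrite sum_deltaT.
apply: eq_bigr => m _; rewrite mulrN -mulNr.
do 3 flat_step.
rewrite /Bx !mxE /= (eq_sym m); ring.
Qed.

Lemma A_frame : comp1 E (Apart g T) 0 =
  - (6^-1 * sqC * \det (Et *m Em)) *
  \sum_(n < 4) \sum_(r < 4) \sum_(s < 4) leviS C 1 n r s * Tf n r s.
Proof.
rewrite claim3.
set k := 6^-1 * sqC; set dK := \det (Et *m Em).
transitivity (k * (- dK * \sum_(c < 4) \sum_(d < 4) \sum_(e < 4)
   \sum_(n < 4) \sum_(r < 4) \sum_(s < 4)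
   leviS C 1 n r s * tC (T c d e) * (E n c * E r d * E s e))).
  congr (_ * _); rewrite mulr_sumr; do 3 flat_step.
  rewrite claim4 det_mulmx claim5 -/dK.
  rewrite (_ : forall (a S0 : C), a * (- S0 * dK) = - dK * (a * S0)); last by move=> *; ring.
  congr (_ * _); do 3 flat_step; ring.
rewrite (_ : forall (X : C), k * (- dK * X) = - (k * dK) * X); last by move=> *; ring.
congr (_ * _).
transitivity (\sum_(n < 4) \sum_(r < 4) \sum_(s < 4) \sum_(c < 4) \sum_(d < 4) \sum_(e < 4)
   leviS C 1 n r s * tC (T c d e) * (E n c * E r d * E s e)).
  exact: (swap33 (fun c d e n r s => leviS C 1 n r s * tC (T c d e) * (E n c * E r d * E s e))).
do 3 flat_step.
rewrite /comp3 mulr_sumr; apply: eq_bigr => m _; rewrite mulr_sumr; apply: eq_bigr => n _.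
rewrite mulr_sumr; apply: eq_bigr => r _; rewrite toCE; ring.
Qed.

Lemma kdK_neq0 : 6^-1 * sqC * \det (Et *m Em) != 0.
Proof.
have Etu : Et \in unitmx by case: (mulmx1_unit EtEt).
rewrite !mulf_neq0 //.
- by rewrite invr_eq0 pnatr_eq0.
- rewrite /sqC fmorph_eq0 sqrtr_eq0 -ltNge normr_gt0 -unitfE -unitmxE.
  exact: g_unit.
- by rewrite -unitfE -unitmxE unitmx_mul Etu Em_unit.
Qed.

Ltac etas := rewrite ?eta00 ?eta01 ?eta02 ?eta03 ?eta10 ?eta11 ?eta12 ?eta13 ?eta20 ?eta21 ?eta22 ?eta23 ?eta30 ?eta31 ?eta32 ?eta33.
Ltac killT H := repeat match goal with |- context [comp3 E T ?a ?b ?c] =>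
  rewrite (H a b c); last by [] end.

Lemma fwd (H : typeII_or_more3 E T) : typeII_or_more3 E (tpart g T) /\
  typeII_or_more1 E (Vpart g T) /\ typeII_or_more1 E (Apart g T).
Proof.
have HV0 : Vf 0 = 0.
  rewrite V_frame !sum4; killT H; etas; ring.
split; [|split].
- move=> p q r; case: (ord4_cases p) => [->|[->|[->|->]]]; case: (ord4_cases q) => [->|[->|[->|->]]];
  case: (ord4_cases r) => [->|[->|[->|->]]] Hp; try discriminate Hp;
  rewrite t_frame; killT H; rewrite ?HV0; etas; ring.
- by move=> a; case: (ord4_cases a) => [->|[->|[->|->]]] Hp; try discriminate Hp.
- move=> a; case: (ord4_cases a) => [->|[->|[->|->]]] Hp; try discriminate Hp.
  rewrite A_frame !sum4; killT H; rewrite ?lz1 ?lz2 ?lz3 ?lz4 ?lz5 ?lz6; ring.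
Qed.

Ltac etas_in h := rewrite ?eta00 ?eta01 ?eta02 ?eta03 ?eta10 ?eta11 ?eta12 ?eta13 ?eta20 ?eta21 ?eta22 ?eta23 ?eta30 ?eta31 ?eta32 ?eta33 in h.

Lemma bwd (Ht : typeII_or_more3 E (tpart g T)) (HV : typeII_or_more1 E (Vpart g T))
  (HA : typeII_or_more1 E (Apart g T)) : typeII_or_more3 E T.
Proof.
have HV0 : Vf 0 = 0 by apply: HV.
have X1 : Tf 0 0 2 = 0.
  have h := Ht 0 0 2 isT; rewrite t_frame -/Vf HV0 in h; etas_in h.
  by rewrite -h; field.
have X2 : Tf 0 0 3 = 0.
  have h := Ht 0 0 3 isT; rewrite t_frame -/Vf HV0 in h; etas_in h.
  by rewrite -h; field.
have Y1 : Tf 0 0 1 = 0.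
  have h := Ht 0 0 1 isT; rewrite t_frame -/Vf HV0 in h; etas_in h.
  by rewrite -h; field.
have Y3 : Tf 2 0 2 = 0.
  have h := Ht 2 2 0 isT; rewrite t_frame -/Vf HV0 (Tf_anti 2 2 0) in h; etas_in h.
  by apply: oppr_inj; rewrite oppr0 -h; field.
have Y6 : Tf 3 0 3 = 0.
  have h := Ht 3 3 0 isT; rewrite t_frame -/Vf HV0 (Tf_anti 3 3 0) in h; etas_in h.
  by apply: oppr_inj; rewrite oppr0 -h; field.
have e4 : Tf 2 0 3 = - Tf 0 2 3 + 2 * 0.
  have h := Ht 0 2 3 isT; rewrite t_frame -/Vf HV0 in h; etas_in h.
  by rewrite -h; field.
have e5 : Tf 3 0 2 = Tf 0 2 3 + 2 * 0.
  have h := Ht 0 3 2 isT; rewrite t_frame -/Vf HV0 (Tf_anti 0 3 2) in h; etas_in h.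
  by rewrite -h; field.
have Y2 : Tf 0 2 3 = 0.
  have h := HA 0 isT; rewrite A_frame in h.
  move/eqP: h; rewrite mulf_eq0 oppr_eq0 (negbTE kdK_neq0) /= => /eqP hS.
  rewrite !sum4 ?lz1 ?lz2 ?lz3 ?lz4 ?lz5 ?lz6 lv1 lv2 lv3 lv4 lv5 lv6 in hS.
  rewrite (Tf_anti 0 3 2) (Tf_anti 2 3 0) (Tf_anti 3 2 0) e4 e5 in hS.
  rewrite (_ : Tf 0 2 3 = - 6^-1 * 0); last by rewrite -[in RHS]hS; field.
  by rewrite mulr0.
have Y4 : Tf 2 0 3 = 0 by rewrite e4 Y2 oppr0 mulr0 addr0.
have Y5 : Tf 3 0 2 = 0 by rewrite e5 Y2 mulr0 addr0.
move=> a b c; case: (ord4_cases a) => [->|[->|[->|->]]];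
  case: (ord4_cases b) => [->|[->|[->|->]]];
  case: (ord4_cases c) => [->|[->|[->|->]]] Hp; try discriminate Hp;
  first [ by rewrite ?Tf_diag ?X1 ?X2 ?Y1 ?Y2 ?Y3 ?Y4 ?Y5 ?Y6
        | by rewrite Tf_anti ?X1 ?X2 ?Y1 ?Y2 ?Y3 ?Y4 ?Y5 ?Y6 oppr0 ].
Qed.

End Frame.

Unset Implicit Arguments.

Theorem lemma1 (R : rcfType) (g : 'M[R]_4) (T : tensor3 R) :
  lorentzian g -> antisym23 T ->
  ((exists E, null_frame g E /\ typeII_or_more3 E T)
   <->
   (exists E, null_frame g E
      /\ typeII_or_more3 E (tpart g T)
      /\ typeII_or_more1 E (Vpart g T)
      /\ typeII_or_more1 E (Apart g T))).
Proof.
move=> _ HT; split.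
- move=> [E [HE H]]; exists E; split=> //; by apply: fwd.
- move=> [E [HE [Ht [HV HA]]]]; exists E; split=> //; exact: (bwd HE HT Ht HV HA).
Qed.
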